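(* Let $A=(a(x),dF(x))$ and $B=(b(x),dF(x))$ be games. If $f(p)\ge h(p)$ for each $p\in[0,1]$, then $g$ is continuous on $[0,1]$.
   Context: A game is a pair $(a(x),dF(x))$ with $dF$ a probability measure on $\mathbb{R}$ and $a\ge0$ measurable with finite positive integral. A real $r$ is fixed; conventions $\exp(-\infty)=0$, $1/(+\infty)=0$. For $p\in[0,1]$ put $c_p(x):=pa(x)+(1-p)b(x)$, $f(p):=\exp(\int\log c_p\,dF)/e^r$, $h(p):=1/\int\frac{1}{c_p(x)}dF(x)$. $g(p)$ denotes the value $u>0$ such that for some $t_u$ (with $0<t_u\le1$) the system $\exp\big(\int\log(\frac{c_p(x)}{u}t_u-t_u+1)\,dF(x)\big)=e^r$, $\int\frac{c_p(x)-u}{c_p(x)t_u-ut_u+u}\,dF(x)=0$ holds; such a solution is unique when it exists, and it exists for every $p$ under the hypothesis $f\ge h$. *)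

(* Defs.v *)
From HB Require Import structures.
From mathcomp Require Import all_boot all_order all_algebra.
From mathcomp Require Import all_classical all_reals all_analysis.
Set Implicit Arguments. Unset Strict Implicit. Unset Printing Implicit Defensive.
Import Order.TTheory GRing.Theory Num.Theory.
Local Open Scope ring_scope.
Local Open Scope ereal_scope.

Section Game.
Context {R : realType}.

Definition is_game (a : R -> R) (dF : probability (measurableTypeR R) R) : Prop :=
  [/\ (forall x, 0 <= a x)%R,
      measurable_fun [set: measurableTypeR R] a,
      0 < \int[dF]_x (a x)%:E & \int[dF]_x (a x)%:E < +oo].

Definition cp (a b : R -> R) (p : R) (x : R) : R := (p * a x + (1 - p) * b x)%R.

Definition elog (x : R) : \bar R := if (0 < x)%R then (ln x)%:E else -oo.

Definition eexp (y : \bar R) : \bar R :=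
  match y with EFin r => (expR r)%:E | +oo => +oo | -oo => 0 end.

Definition erecip (x : R) : \bar R := if (0 < x)%R then (x^-1)%:E else +oo.

Definition einv (y : \bar R) : \bar R :=
  match y with EFin r => (r^-1)%:E | _ => 0 end.

Variables (a b : R -> R) (dF : probability (measurableTypeR R) R) (r : R).

Definition f_fun (p : R) : \bar R :=
  eexp (\int[dF]_x elog (cp a b p x)) * (expR (- r))%:E.

Definition h_fun (p : R) : \bar R := einv (\int[dF]_x erecip (cp a b p x)).

Definition g_spec (p u : R) : Prop :=
  (0 < u)%R /\ exists t : R, [/\ (0 < t <= 1)%R,
    eexp (\int[dF]_x elog (cp a b p x / u * t - t + 1)%R) = (expR r)%:E &
    \int[dF]_x ((cp a b p x - u) / (cp a b p x * t - u * t + u))%:E = 0].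

End Game.

(* Main.v *)
Require Import Defs.
From HB Require Import structures.
From mathcomp Require Import all_boot all_order all_algebra.
From mathcomp Require Import all_classical all_reals all_analysis.
From mathcomp Require Import measurable_realfun.
From mathcomp.algebra_tactics Require Import ring lra.
Import Order.TTheory GRing.Theory Num.Theory.
Import numFieldNormedType.Exports.
Local Open Scope ring_scope.
Local Open Scope classical_set_scope.

Section Gen.
Context d (T : measurableType d) (R : realType).
Variable P : probability T R.
Local Open Scope ereal_scope.

Lemma mono_int (f g : T -> \bar R) : measurable_fun setT f -> measurable_fun setT g ->
  (forall x, f x <= g x) -> \int[P]_x f x <= \int[P]_x g x.
Proof.
move=> mf mg fg; rewrite integralE [leRHS]integralE leeB//.
- apply: (ge0_le_integral P measurableT (fun x _ => funepos_ge0 f x)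
    (measurable_funepos mf) (measurable_funepos mg)).
  by move=> x _; apply: (@funepos_le _ _ setT); [move=> y _; exact: fg|exact: in_setT].
- apply: (ge0_le_integral P measurableT (fun x _ => funeneg_ge0 g x)
    (measurable_funeneg mg) (measurable_funeneg mf)).
  by move=> x _; apply: (@funeneg_le _ _ setT); [move=> y _; exact: fg|exact: in_setT].
Qed.

Lemma int_of_fin (f : T -> \bar R) : measurable_fun setT f ->
  \int[P]_x f x \is a fin_num -> P.-integrable setT f.
Proof.
move=> mf; rewrite integralE => hf.
have hp : 0 <= \int[P]_x f^\+ x by apply: integral_ge0 => x _; exact: funepos_ge0.
have hn : 0 <= \int[P]_x f^\- x by apply: integral_ge0 => x _; exact: funeneg_ge0.
have fn : \int[P]_x f^\- x \is a fin_num.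
  move: hf; case: (\int[P]_x f^\- x) hn => //= _.
  by rewrite addeNy.
have fp : \int[P]_x f^\+ x \is a fin_num.
  move: hf; move: fn; case: (\int[P]_x f^\- x) => //= s _.
  by case: (\int[P]_x f^\+ x) hp.
apply/integrableP; split => //.
rewrite (_ : (fun x => `|f x|) = (fun x => f^\+ x + f^\- x)); last first.
  by apply/funext => x; rewrite -/((abse \o f) x) fune_abse.
rewrite ge0_integralD//; first by rewrite lte_add_pinfty// ltey_eq ?fp ?fn.
all: by [move=> x _; exact: funepos_ge0 | move=> x _; exact: funeneg_ge0
  | exact: measurable_funepos | exact: measurable_funeneg].
Qed.

Lemma key_ae (f g : T -> \bar R) (h : T -> R) :
  measurable_fun setT f -> P.-integrable setT g -> P.-integrable setT (EFin \o h) ->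
  {ae P, forall x, setT x -> f x <= g x + (h x)%:E} ->
  \int[P]_x f x <= \int[P]_x g x + \int[P]_x (h x)%:E.
Proof.
move=> mf ig ih hae.
have mg : measurable_fun setT g by exact: (measurable_int _ ig).
have mh : measurable_fun setT (EFin \o h) by exact: (measurable_int _ ih).
have mgh : measurable_fun setT (fun x => g x + (h x)%:E).
  exact: emeasurable_funD.
pose k x := maxe (f x) (g x + (h x)%:E).
have mk : measurable_fun setT k by exact: measurable_maxe.
have fk : forall x, f x <= k x by move=> x; rewrite /k le_max lexx.
apply: le_trans; first exact: (@mono_int f k mf mk fk).
rewrite -(integralD measurableT ig ih).
rewrite le_eqVlt; apply/orP; left; apply/eqP.
apply: ae_eq_integral => //.
case: hae => N [mN PN0 sub]; exists N; split => // x /= nx; apply: sub => /= Hx.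
apply: nx => _; rewrite /k; apply/max_idPr; exact: Hx.
Qed.

End Gen.

Section Real.
Context {R : realType}.

Lemma ln_le_sub1 (x : R) : 0 < x -> ln x <= x - 1.
Proof.
move=> x0; have := @le_ln1Dx R (x - 1).
have -> : 1 + (x - 1) = x by ring.
by apply; lra.
Qed.

Lemma measurable_inv : measurable_fun [set: R] (fun y : R => y^-1).
Proof.
have -> : (fun y : R => y^-1) = (fun y => if 0 < y then expR (- ln y)
   else if y < 0 then - expR (- ln (- y)) else 0).
  apply/funext => y; have [hy|hy|->] := ltrgtP y 0.
  - by rewrite expRN lnK ?posrE ?oppr_gt0// invrN opprK.
  - by rewrite expRN lnK// posrE.
  - by rewrite invr0.
apply: measurable_fun_ifT.
- by apply: measurable_fun_ltr; [exact: measurable_cst|exact: measurable_id].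
- by apply: measurableT_comp; [exact: measurable_expR|
    apply: measurableT_comp; [exact: measurable_funN; exact: measurable_id|exact: measurable_ln]].
apply: measurable_fun_ifT.
- by apply: measurable_fun_ltr; [exact: measurable_id|exact: measurable_cst].
- apply: measurableT_comp; first exact: measurable_funN.
  apply: measurableT_comp; first exact: measurable_expR.
  apply: measurableT_comp; first by apply: measurable_funN; exact: measurable_id.
  apply: measurableT_comp; first exact: measurable_ln.
  by apply: measurable_funN; exact: measurable_id.
exact: measurable_cst.
Qed.

Lemma lnbound {Y m Aa e sg : R} : 0 < sg -> sg <= Aa -> 0 <= e -> 0 < m -> 0 < Y ->
  Y <= m * (Aa + e) -> ln Y <= ln m + ln Aa + e / sg.
Proof.
move=> sg0 sgA e0 m0 Y0 hY.
have A0 : 0 < Aa by apply: lt_le_trans sgA.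
have Ae0 : 0 < Aa + e by lra.
apply: le_trans (_ : ln (m * (Aa + e)) <= _).
  by rewrite ler_ln ?posrE ?mulr_gt0.
rewrite lnM ?posrE// -addrA lerD2l.
have -> : Aa + e = Aa * (1 + e / Aa) by field; rewrite gt_eqF.
have eA : 0 <= e / Aa by apply: divr_ge0 => //; exact: ltW.
have e1 : 0 < 1 + e / Aa by lra.
rewrite lnM ?posrE// lerD2l.
apply: le_trans (le_ln1Dx _) _; first by lra.
by apply: ler_wpM2l => //; rewrite lef_pV2 ?posrE.
Qed.

Lemma diff_bound (q p : R) {al be : R} : 0 <= al -> 0 <= be ->
  (q - p) * (al - be) <= `|q - p| * (al + be).
Proof.
move=> a0 b0; have [h|h] := leP 0 (q - p).
  rewrite ger0_norm//; apply: ler_wpM2l => //; lra.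
rewrite ltr0_norm//.
have -> : (q - p) * (al - be) = (- (q - p)) * (be - al) by ring.
apply: ler_wpM2l; lra.
Qed.

Lemma neg_ln1B (sg : R) : 0 < sg < 1 -> - ln (1 - sg) <= sg / (1 - sg).
Proof.
move=> /andP[s0 s1].
have h0 : 0 < 1 - sg by lra.
rewrite -lnV ?posrE//; apply: le_trans (ln_le_sub1 _ _) _; first by rewrite invr_gt0.
by rewrite le_eqVlt; apply/orP; left; apply/eqP; field; rewrite gt_eqF.
Qed.

End Real.

Section Game.
Context {R : realType}.
Local Notation T := (measurableTypeR R).
Variables (a b : R -> R) (P : probability T R) (r : R).
Hypotheses (ga : is_game a P) (gb : is_game b P).

Lemma a_ge0 x : 0 <= a x. Proof. by case: ga. Qed.
Lemma b_ge0 x : 0 <= b x. Proof. by case: gb. Qed.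
Lemma ma : measurable_fun setT a. Proof. by case: ga. Qed.
Lemma mb : measurable_fun setT b. Proof. by case: gb. Qed.

Lemma int_a : P.-integrable setT (EFin \o a).
Proof.
case: ga => a0 mfa _ afin; apply/integrableP; split.
  exact/measurable_EFinP.
under eq_integral do rewrite /= ger0_norm//.
exact: afin.
Qed.

Lemma int_b : P.-integrable setT (EFin \o b).
Proof.
case: gb => b0 mfb _ bfin; apply/integrableP; split.
  exact/measurable_EFinP.
under eq_integral do rewrite /= ger0_norm//.
exact: bfin.
Qed.

Definition A := fine (\int[P]_x (a x)%:E).
Definition B := fine (\int[P]_x (b x)%:E).

Lemma AE : (\int[P]_x (a x)%:E = A%:E)%E.
Proof. by rewrite /A fineK//; exact: (integrable_fin_num measurableT int_a). Qed.
Lemma BE : (\int[P]_x (b x)%:E = B%:E)%E.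
Proof. by rewrite /B fineK//; exact: (integrable_fin_num measurableT int_b). Qed.

Lemma A_ge0 : 0 <= A.
Proof. by rewrite -lee_fin -AE; apply: integral_ge0 => x _; rewrite lee_fin a_ge0. Qed.
Lemma B_ge0 : 0 <= B.
Proof. by rewrite -lee_fin -BE; apply: integral_ge0 => x _; rewrite lee_fin b_ge0. Qed.

Lemma mlin al be ga' : measurable_fun setT (fun x => al + be * a x + ga' * b x).
Proof.
apply: measurable_funD; first apply: measurable_funD.
- exact: measurable_cst.
- by apply: measurable_funM; [exact: measurable_cst|exact: ma].
by apply: measurable_funM; [exact: measurable_cst|exact: mb].
Qed.

Lemma int_lin al be ga' : P.-integrable setT (EFin \o (fun x => al + be * a x + ga' * b x)).
Proof.
have -> : EFin \o (fun x => al + be * a x + ga' * b x) =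
  (fun x => ((EFin \o cst al) x + (be%:E * (EFin \o a) x)) + (ga'%:E * (EFin \o b) x))%E.
  by apply/funext => x /=.
apply: integrableD => //; first apply: integrableD => //.
- exact: finite_measure_integrable_cst.
- exact: integrableZl int_a.
exact: integrableZl int_b.
Qed.

Lemma integral_lin al be ga' :
  (\int[P]_x (al + be * a x + ga' * b x)%:E = (al + be * A + ga' * B)%:E)%E.
Proof.
have -> : (fun x => (al + be * a x + ga' * b x)%:E) =
  (fun x => ((EFin \o cst al) x + (be%:E * (EFin \o a) x)) + (ga'%:E * (EFin \o b) x))%E.
  by apply/funext => x /=.
rewrite integralD//; last 2 first.
- apply: integrableD => //; first exact: finite_measure_integrable_cst.
  exact: integrableZl int_a.
- exact: integrableZl int_b.
rewrite integralD//; last 2 first.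
- exact: finite_measure_integrable_cst.
- exact: integrableZl int_a.
have -> : (\int[P]_x (EFin \o cst al) x = al%:E * P setT)%E by rewrite -integral_cst.
rewrite probability_setT mule1 !integralZl//; try exact: int_a; try exact: int_b.
by rewrite AE BE.
Qed.

Lemma mcp p : measurable_fun setT (cp a b p).
Proof.
rewrite /cp; apply: measurable_funD.
- by apply: measurable_funM; [exact: measurable_cst|exact: ma].
by apply: measurable_funM; [exact: measurable_cst|exact: mb].
Qed.

Lemma cp_ge0 {p} x : 0 <= p <= 1 -> 0 <= cp a b p x.
Proof.
move=> /andP[p0 p1]; rewrite /cp; apply: addr_ge0; apply: mulr_ge0 => //.
- exact: a_ge0.
- by rewrite subr_ge0.
- exact: b_ge0.
Qed.

Definition X p u s x := cp a b p x / u * s - s + 1.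

Lemma XE p u s : X p u s = (fun x => (1 - s) + (p * (u^-1 * s)) * a x + ((1 - p) * (u^-1 * s)) * b x).
Proof. by apply/funext => x; rewrite /X /cp; ring. Qed.

Lemma int_X p u s : P.-integrable setT (EFin \o X p u s).
Proof. by rewrite XE; exact: int_lin. Qed.

Lemma integral_X p u s : (\int[P]_x (X p u s x)%:E = ((1 - s) + (p * (u^-1 * s)) * A + ((1 - p) * (u^-1 * s)) * B)%:E)%E.
Proof. by rewrite XE integral_lin. Qed.

Lemma meas_elog (F : T -> R) : measurable_fun setT F -> measurable_fun setT (fun x => elog (F x)).
Proof.
move=> mF; rewrite /elog; apply: measurable_fun_ifT.
- by apply: measurable_fun_ltr; [exact: measurable_cst|exact: mF].
- by apply/measurable_EFinP; apply: measurableT_comp; [exact: measurable_ln|exact: mF].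
exact: measurable_cst.
Qed.

Lemma mX p u s : measurable_fun setT (X p u s).
Proof. by rewrite XE; exact: mlin. Qed.

Lemma int_elog (F : T -> R) s : 0 < s -> P.-integrable setT (EFin \o F) ->
  (forall x, s <= F x) -> P.-integrable setT (fun x => elog (F x)).
Proof.
move=> s0 iF Fs.
have mF : measurable_fun setT F by apply/measurable_EFinP; exact: (measurable_int _ iF).
apply: (@le_integrable _ _ _ P setT measurableT _ (EFin \o (fun x => F x + `|ln s|))).
- exact: meas_elog.
- move=> x _ /=; have Fx0 : 0 < F x by apply: lt_le_trans (Fs x).
  rewrite /elog Fx0 !abse_EFin lee_fin (ger0_norm (x := F x + _)); last first.
    by rewrite addr_ge0// ltW.
  have [l0|l0] := leP 0 (ln (F x)).
    rewrite (ger0_norm l0); have := ln_le_sub1 _ Fx0.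
    have := normr_ge0 (ln s); lra.
  rewrite (ltr0_norm l0).
  have : ln s <= ln (F x) by rewrite ler_ln ?posrE.
  have : - ln s <= `|ln s| by rewrite -normrN ler_norm.
  have := Fx0; lra.
- have -> : EFin \o (fun x => F x + `|ln s|) = (fun x => (EFin \o F) x + (EFin \o cst `|ln s|%R) x)%E.
    by apply/funext.
  apply: integrableD => //; exact: finite_measure_integrable_cst.
Qed.

Lemma eexp_inj {y : \bar R} {z : R} : eexp y = (expR z)%:E -> y = z%:E.
Proof.
case: y => [y||] /=.
- by move=> [] /expR_inj ->.
- by [].
- by move=> [] h; have := expR_gt0 z; rewrite -h ltxx.
Qed.

Lemma elog_pos {y : R} : 0 < y -> elog y = (ln y)%:E.
Proof. by move=> y0; rewrite /elog y0. Qed.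

Lemma elog_le (y : R) (z : \bar R) : (0 < y -> ((ln y)%:E <= z)%E) -> (elog y <= z)%E.
Proof. by rewrite /elog; case: ifP => // _ h; [exact: h|exact: leNye]. Qed.

Lemma tangent p u t s : 0 <= p <= 1 -> 0 < u -> 0 < t <= 1 -> 0 <= s <= 1 ->
  (\int[P]_x elog (X p u t x) = r%:E)%E ->
  (\int[P]_x ((cp a b p x - u) / (cp a b p x * t - u * t + u))%:E = 0)%E ->
  (\int[P]_x elog (X p u s x) <= r%:E)%E.
Proof.
move=> hp u0 /andP[t0 t1] /andP[s0 s1] hG hpsi.
pose psi x := (cp a b p x - u) / (cp a b p x * t - u * t + u).
have mpsi : measurable_fun setT psi.
  rewrite /psi; apply: measurable_funM.
    by apply: measurable_funB; [exact: mcp|exact: measurable_cst].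
  apply: measurableT_comp; first exact: measurable_inv.
  apply: measurable_funD; last exact: measurable_cst.
  apply: measurable_funB; last exact: measurable_cst.
  by apply: measurable_funM; [exact: mcp|exact: measurable_cst].
have ipsi : P.-integrable setT (EFin \o psi).
  apply: int_of_fin; first exact/measurable_EFinP.
  by rewrite hpsi.
have mg : measurable_fun setT (fun x => elog (X p u t x)) by apply: meas_elog; exact: mX.
have ig : P.-integrable setT (fun x => elog (X p u t x)).
  by apply: int_of_fin => //; rewrite hG.
have ih : P.-integrable setT (EFin \o (fun x => (s - t) * psi x)).
  have -> : EFin \o (fun x => (s - t) * psi x) = (fun x => (s - t)%:E * (EFin \o psi) x)%E.
    by apply/funext.
  exact: integrableZl.
have hh : (\int[P]_x ((s - t) * psi x)%:E = 0)%E.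
  have -> : (fun x => ((s - t) * psi x)%:E) = (fun x => (s - t)%:E * (EFin \o psi) x)%E.
    by apply/funext.
  by rewrite integralZl// hpsi mule0.
have := @key_ae _ _ _ P (fun x => elog (X p u s x)) (fun x => elog (X p u t x))
  (fun x => (s - t) * psi x) _ ig ih.
rewrite hG hh adde0; apply.
  by apply: meas_elog; exact: mX.
apply: filterS (integrable_ae measurableT ig) => x /(_ I) hfin _.
have Xt0 : 0 < X p u t x.
  by move: hfin; rewrite /elog; case: ifP.
rewrite (elog_pos Xt0); apply: elog_le => Xs0.
rewrite -EFinD lee_fin.
have cx0 := cp_ge0 x hp.
have eq1 : cp a b p x * t - u * t + u = u * X p u t x.
  by rewrite /X; field; rewrite gt_eqF.
have eq2 : X p u s x = X p u t x * (1 + (s - t) * psi x).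
  have Xn0 : X p u t x != 0 by rewrite gt_eqF.
  rewrite /psi eq1; move: Xn0; rewrite /X => Xn0.
  have D0 : 0 < cp a b p x * t - u * t + u by rewrite eq1 mulr_gt0.
  field; apply/andP; split; first by rewrite gt_eqF.
  by apply/eqP => h; move: D0; rewrite (mulrC u t); lra.
have hz : -1 < (s - t) * psi x.
  have : 0 < 1 + (s - t) * psi x.
    by rewrite -(@pmulr_rgt0 _ (X p u t x))// -eq2.
  lra.
rewrite eq2 lnM ?posrE//; last by rewrite -(@pmulr_rgt0 _ (X p u t x))// -eq2.
by rewrite lerD2l le_ln1Dx.
Qed.

Lemma TP p u : 0 <= p <= 1 -> g_spec a b P r p u ->
  forall s, 0 <= s <= 1 -> (\int[P]_x elog (X p u s x) <= r%:E)%E.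
Proof.
move=> hp [u0 [t [ht hE hpsi]]] s hs.
apply: (@tangent p u t s hp u0 ht hs _ hpsi).
exact: eexp_inj hE.
Qed.

Lemma cp_diff p q x : cp a b q x <= cp a b p x + `|q - p| * (a x + b x).
Proof.
have := diff_bound q p (a_ge0 x) (b_ge0 x).
have -> : cp a b q x = cp a b p x + (q - p) * (a x - b x) by rewrite /cp; ring.
lra.
Qed.

Lemma F1 q w u lam t x : 0 <= q <= 1 -> 0 < u -> 1 < lam -> lam * u <= w -> 0 < t <= 1 ->
  X q w t x <= (1 - t * (1 - lam^-1)) * X q u (t / (lam * (1 - t * (1 - lam^-1)))) x.
Proof.
move=> hq u0 l1 hw /andP[t0 t1].
have l0 : 0 < lam by lra.
have lu0 : 0 < lam * u by apply: mulr_gt0.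
have w0 : 0 < w by apply: lt_le_trans hw.
have il : lam^-1 < 1 by rewrite invf_lt1.
have il0 : 0 < lam^-1 by rewrite invr_gt0.
have m0 : 0 < 1 - t * (1 - lam^-1).
  have : t * (1 - lam^-1) <= 1 - lam^-1 by rewrite ler_piMl//; lra.
  lra.
have -> : (1 - t * (1 - lam^-1)) * X q u (t / (lam * (1 - t * (1 - lam^-1)))) x =
   cp a b q x / (lam * u) * t - t + 1.
  rewrite /X; field; rewrite (gt_eqF u0) (gt_eqF l0) /=.
  have -> : lam - t * (lam - 1) = lam * (1 - t * (1 - lam^-1)) by field; rewrite gt_eqF.
  by rewrite gt_eqF// mulr_gt0.
rewrite /X lerD2r lerD2r; apply: ler_wpM2r; first exact: ltW.
apply: ler_wpM2l; first exact: cp_ge0.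
by rewrite lef_pV2 ?posrE.
Qed.

Lemma upper p u : 0 <= p <= 1 -> 0 < u ->
  (forall s, 0 <= s <= 1 -> (\int[P]_x elog (X p u s x) <= r%:E)%E) ->
  forall lam, 1 < lam ->
  exists2 dl : R, 0 < dl & forall q w, 0 <= q <= 1 -> `|q - p| < dl ->
    g_spec a b P r q w -> w < lam * u.
Proof.
move=> hp u0 TPp lam l1.
have l0 : 0 < lam by lra.
have il : lam^-1 < 1 by rewrite invf_lt1.
have il0 : 0 < lam^-1 by rewrite invr_gt0.
have K0 : 0 <= A + B by have := A_ge0; have := B_ge0; lra.
pose e0 := 1 - lam^-1.
have e00 : 0 < e0 by rewrite /e0; lra.
have e01 : e0 < 1 by rewrite /e0; lra.
pose sg := e0 / 8.
have sg0 : 0 < sg by rewrite /sg; lra.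
have sg1 : sg < 1 by rewrite /sg; lra.
have usg0 : 0 < u * sg by apply: mulr_gt0.
pose dl := e0 * u * sg / (4 * (A + B + 1)).
have dl0 : 0 < dl.
  by rewrite /dl; apply: divr_gt0; [rewrite !mulr_gt0|lra].
exists dl => // q w hq hqp [w0 [t [/andP[t0 t1] hE _]]].
have hG : (\int[P]_x elog (X q w t x) = r%:E)%E by exact: eexp_inj hE.
rewrite ltNge; apply/negP => hw.
have hF1 : forall x, X q w t x <= (1 - t * e0) * X q u (t / (lam * (1 - t * e0))) x.
  by move=> x; apply: F1 => //; rewrite t0 t1.
pose m := 1 - t * e0.
have m0 : 0 < m.
  have : t * e0 <= e0 by rewrite ler_piMl// ltW.
  rewrite /m; lra.
have lm1 : 1 <= lam * m.
  have -> : lam * m = lam - t * (lam - 1) by rewrite /m /e0; field; rewrite gt_eqF.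
  have : t * (lam - 1) <= lam - 1 by rewrite ler_piMl//; lra.
  lra.
pose t' := t / (lam * m).
have lm0 : 0 < lam * m by lra.
have t'0 : 0 < t' by rewrite /t' divr_gt0.
have t't : t' <= t by rewrite /t' ler_pdivrMr// ler_peMr// ltW.
have t'1 : t' <= 1 by lra.
have {}hF1 : forall x, X q w t x <= m * X q u t' x by move=> x; exact: hF1.
pose D := `|q - p|.
have D0 : 0 <= D by exact: normr_ge0.
pose Q := D * (A + B) / (u * sg).
have Q0 : 0 <= Q by rewrite /Q; apply: divr_ge0; [apply: mulr_ge0|exact: ltW].
have hQ : Q < e0 / 4.
  rewrite /Q ltr_pdivrMr//.
  have h1 : D * (A + B) <= dl * (A + B) by apply: ler_wpM2r => //; exact: ltW.
  have h2 : dl * (A + B) < e0 / 4 * (u * sg).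
    have -> : dl * (A + B) = (e0 / 4 * (u * sg)) * ((A + B) / (A + B + 1)).
      by rewrite /dl; field; rewrite gt_eqF//; lra.
    rewrite gtr_pMr; last by rewrite !mulr_gt0.
    by rewrite ltr_pdivrMr; lra.
  lra.
have lnm : ln m <= - (t * e0) by have := ln_le_sub1 _ m0; rewrite /m; lra.
have mf : measurable_fun setT (fun x => elog (X q w t x)) by apply: meas_elog; exact: mX.
have hA : forall x, cp a b p x / u >= 0 by move=> x; apply: divr_ge0; [exact: cp_ge0|exact: ltW].
have hAq : forall x, cp a b q x / u >= 0 by move=> x; apply: divr_ge0; [exact: cp_ge0|exact: ltW].
have hdiff : forall x, cp a b q x / u <= cp a b p x / u + D * (a x + b x) / u.
  move=> x; rewrite -mulrDl; apply: ler_wpM2r; first by rewrite invr_ge0 ltW.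
  exact: cp_diff.
have hab : forall x, 0 <= a x + b x by move=> x; apply: addr_ge0; [exact: a_ge0|exact: b_ge0].
case: (leP t' (1 - sg)) => ht'.
- pose c1 := t' * D / (u * sg).
  have ig : P.-integrable setT (fun x => elog (X p u t' x)).
    apply: (@int_elog (X p u t') sg sg0 (int_X p u t')) => x; rewrite /X.
    have := hA x; have : 0 <= cp a b p x / u * t' by rewrite mulr_ge0// ltW.
    lra.
  have := @key_ae _ _ _ P (fun x => elog (X q w t x)) (fun x => elog (X p u t' x))
    (fun x => ln m + c1 * a x + c1 * b x) mf ig (int_lin _ _ _).
  rewrite hG integral_lin => key.
  have hz : (r <= r + (ln m + c1 * A + c1 * B))%R.
    rewrite -lee_fin EFinD; apply: le_trans (key _) _; last first.
      by apply: leeD2r; apply: TPp; rewrite ltW //= t'1.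
    apply: aeW => x _.
    apply: elog_le => Y0.
    have Aa0 : sg <= X p u t' x.
      rewrite /X; have := hA x; have : 0 <= cp a b p x / u * t' by rewrite mulr_ge0// ltW.
      lra.
    rewrite (elog_pos (lt_le_trans sg0 Aa0)) -EFinD lee_fin.
    have e0' : 0 <= t' * D * (a x + b x) / u.
      apply: divr_ge0; last exact: ltW.
      by rewrite mulr_ge0// mulr_ge0// ltW.
    have hY : X q w t x <= m * (X p u t' x + t' * D * (a x + b x) / u).
      apply: le_trans (hF1 x) _; apply: ler_wpM2l; first exact: ltW.
      rewrite /X; have := ler_wpM2r (ltW t'0) (hdiff x).
      lra.
    have := lnbound sg0 Aa0 e0' m0 Y0 hY.
    have -> : t' * D * (a x + b x) / u / sg = c1 * a x + c1 * b x.
      by rewrite /c1; field; rewrite !gt_eqF.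
    lra.
  have hc1 : c1 * A + c1 * B = t' * Q by rewrite /c1 /Q; field; rewrite !gt_eqF.
  have h1 : t' * Q <= t * Q by apply: ler_wpM2r.
  have h2 : t * Q < t * (e0 / 4) by rewrite ltr_pM2l.
  have h3 : t * (e0 / 4) = (t * e0) / 4 by ring.
  have te0 : 0 < t * e0 by rewrite mulr_gt0.
  move: hz; rewrite -addrA hc1; move: h1 h2 lnm te0; rewrite h3.
  move: (t * e0) (t * Q) (t' * Q) (ln m) => X1 X2 X3 X4.
  lra.
- pose c2 := D / (u * sg).
  have sg1' : 0 <= 1 - sg by lra.
  have Z0 : forall x, sg <= X p u (1 - sg) x.
    move=> x; rewrite /X; have := hA x.
    have : 0 <= cp a b p x / u * (1 - sg) by rewrite mulr_ge0.
    lra.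
  have ig : P.-integrable setT (fun x => elog (X p u (1 - sg) x)).
    exact: (@int_elog (X p u (1 - sg)) sg sg0 (int_X p u (1 - sg)) Z0).
  have := @key_ae _ _ _ P (fun x => elog (X q w t x)) (fun x => elog (X p u (1 - sg) x))
    (fun x => (ln m - ln (1 - sg)) + c2 * a x + c2 * b x) mf ig (int_lin _ _ _).
  rewrite hG integral_lin => key.
  have hz : (r <= r + ((ln m - ln (1 - sg)) + c2 * A + c2 * B))%R.
    rewrite -lee_fin EFinD; apply: le_trans (key _) _; last first.
      apply: leeD2r; apply: TPp; rewrite sg1' /=; lra.
    apply: aeW => x _; apply: elog_le => Y0.
    have Zx0 : 0 < X p u (1 - sg) x := lt_le_trans sg0 (Z0 x).
    rewrite (elog_pos Zx0) -EFinD lee_fin.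
    pose Aa := cp a b p x / u + sg.
    have sgA : sg <= Aa by rewrite /Aa; have := hA x; lra.
    have e0' : 0 <= D * (a x + b x) / u.
      apply: divr_ge0; last exact: ltW.
      by rewrite mulr_ge0.
    have hY : X q w t x <= m * (Aa + D * (a x + b x) / u).
      apply: le_trans (hF1 x) _; apply: ler_wpM2l; first exact: ltW.
      rewrite /X /Aa.
      have h1 : cp a b q x / u * t' <= cp a b q x / u by rewrite ler_piMr // hAq.
      have := hdiff x.
      lra.
    have hb := lnbound sg0 sgA e0' m0 Y0 hY.
    have hZ : (1 - sg) * Aa <= X p u (1 - sg) x.
      rewrite /X /Aa; have := hA x; have : 0 <= sg * sg by rewrite mulr_ge0// ltW.
      lra.
    have hlnA : ln Aa <= ln (X p u (1 - sg) x) - ln (1 - sg).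
      have A0 : 0 < Aa by lra.
      have sgp : 0 < 1 - sg by lra.
      have : ln ((1 - sg) * Aa) <= ln (X p u (1 - sg) x).
        by rewrite ler_ln ?posrE ?mulr_gt0.
      rewrite lnM ?posrE//; lra.
    have hc : D * (a x + b x) / u / sg = c2 * a x + c2 * b x.
      by rewrite /c2; field; rewrite !gt_eqF.
    rewrite hc in hb; lra.
  have hc2 : c2 * A + c2 * B = Q by rewrite /c2 /Q; field; rewrite !gt_eqF.
  have hs : - ln (1 - sg) <= sg / (1 - sg) by apply: neg_ln1B; rewrite sg0 sg1.
  have hs2 : sg / (1 - sg) <= 8 / 7 * sg.
    rewrite ler_pdivrMr; last lra.
    have : sg * sg <= sg * (1 / 8) by apply: ler_wpM2l; [exact: ltW|rewrite /sg; lra].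
    lra.
  have ht : 1 - sg < t by lra.
  have hte : (1 - sg) * e0 <= t * e0 by apply: ler_wpM2r; [exact: ltW|exact: ltW].
  have hee : sg * e0 <= sg by rewrite ler_piMr ?ltW.
  have hsg : sg = e0 / 8 by [].
  have eqs : (1 - sg) * e0 = e0 - sg * e0 by ring.
  rewrite eqs in hte.
  move: hz hc2 hte hee lnm; move: (t * e0) (sg * e0) (ln m) (c2 * A) (c2 * B) => X1 X2 X3 X4 X5.
  lra.
Qed.

Lemma lower p u t0 q w kap : 0 <= p <= 1 -> 0 <= q <= 1 -> 0 < u -> 0 < t0 <= 1 ->
  (\int[P]_x elog (X p u t0 x) = r%:E)%E -> 0 < kap < 1 ->
  (forall x, kap * cp a b p x <= cp a b q x) -> 0 < w ->
  (forall s, 0 <= s <= 1 -> (\int[P]_x elog (X q w s x) <= r%:E)%E) ->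
  kap * u <= w.
Proof.
move=> hp hq u0 /andP[t00 t01] hG /andP[k0 k1] hk w0 TPq.
rewrite leNgt; apply/negP => hw.
pose mu := kap * u / w.
have mu1 : 1 < mu by rewrite /mu ltr_pdivlMr// mul1r.
pose den := mu - (mu - 1) * t0.
have den0 : t0 <= den.
  rewrite /den; have : 0 <= mu * (1 - t0) by rewrite mulr_ge0//; lra.
  lra.
have den0' : 0 < den by lra.
pose s := t0 / den.
have s0 : 0 < s by rewrite /s divr_gt0.
have s1 : s <= 1 by rewrite /s ler_pdivrMr// mul1r.
pose M := 1 + s * (mu - 1).
have M1 : 1 < M.
  rewrite /M; have : 0 < s * (mu - 1) by rewrite mulr_gt0// subr_gt0.
  lra.
have M0 : 0 < M by lra.
have key : forall x, M * X p u t0 x <= X q w s x.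
  have sden : s * den = t0 by rewrite /s divfK// gt_eqF.
  have hMt : M * t0 = s * mu by rewrite /M; move: sden; rewrite /den; lra.
  move=> x; have -> : M * X p u t0 x = kap * cp a b p x / w * s - s + 1.
    have mueq : cp a b p x / u * mu = kap * cp a b p x / w.
      by rewrite /mu; field; rewrite !gt_eqF.
    have -> : M * X p u t0 x = cp a b p x / u * (M * t0) - M * t0 + M by rewrite /X; ring.
    rewrite hMt.
    have -> : cp a b p x / u * (s * mu) = (cp a b p x / u * mu) * s by ring.
    by rewrite mueq /M; ring.
  rewrite /X lerD2r lerD2r; apply: ler_wpM2r; first exact: ltW.
  by apply: ler_wpM2r; [rewrite invr_ge0 ltW|exact: hk].
have mg : measurable_fun setT (fun x => elog (X p u t0 x)) by apply: meas_elog; exact: mX.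
have ig : P.-integrable setT (fun x => elog (X p u t0 x)) by apply: int_of_fin => //; rewrite hG.
have hle : (\int[P]_x (elog (X p u t0 x) + (EFin \o cst (ln M)) x) <=
    \int[P]_x elog (X q w s x))%E.
  apply: mono_int.
  - apply: emeasurable_funD => //.
    by apply/measurable_EFinP; exact: measurable_cst.
  - by apply: meas_elog; exact: mX.
  move=> x /=; rewrite /elog; case: ifP => hX; last by rewrite addNye leNye.
  have hX' : 0 < X q w s x by apply: lt_le_trans (key x); rewrite mulr_gt0.
  rewrite hX' -EFinD lee_fin -lnM ?posrE// ler_ln ?posrE ?mulr_gt0//.
  by rewrite mulrC; exact: key.
rewrite integralD// in hle; last exact: finite_measure_integrable_cst.
have hc : (\int[P]_x (EFin \o cst (ln M)) x = (ln M)%:E * P setT)%E by rewrite -integral_cst.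
rewrite hc probability_setT mule1 hG in hle.
have hs : 0 <= s <= 1 by rewrite s1 ltW.
have := le_trans hle (TPq s hs).
rewrite -EFinD lee_fin; have := ln_gt0 M1; lra.
Qed.

End Game.

Theorem lemmaD16 (R : realType) (a b : R -> R)
    (dF : probability (measurableTypeR R) R) (r : R) :
  is_game a dF -> is_game b dF ->
  (forall p : R, p \in `[0, 1] -> (h_fun a b dF p <= f_fun a b dF r p)%E) ->
  forall g : R -> R,
    (forall p : R, p \in `[0, 1] -> g_spec a b dF r p (g p)) ->
    {within `[(0:R), (1:R)], continuous g}.
Proof.
move=> ga gb _ g hg.
apply/subspace_continuousP => p Pp.
have Pp' : p \in `[0, 1] by rewrite inE; exact: Pp.
have hp : 0 <= p <= 1 by move: Pp'; rewrite inE /= in_itv.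
have [u0 [t0 [ht0 hE _]]] := hg p Pp'.
have hG := eexp_inj hE.
have TPp := @TP _ a b dF r ga gb p (g p) hp (hg p Pp').
apply/cvgrPdist_lt => e e0.
have l1 : 1 < 1 + e / (2 * g p) by rewrite ltrDl divr_gt0// mulr_gt0.
have [d1 d10 H1] := @upper _ a b dF r ga gb p (g p) hp u0 TPp (1 + e / (2 * g p)) l1.
pose kap := 2 * g p / (2 * g p + e).
have kk : 0 < kap < 1.
  rewrite /kap divr_gt0 ?mulr_gt0 ?addr_gt0 ?mulr_gt0//=.
  by rewrite ltr_pdivrMr ?addr_gt0 ?mulr_gt0// mul1r ltrDl.
have k1 : 0 < 1 - kap by move: kk => /andP[_]; rewrite subr_gt0.
pose d2 := Num.min (if 0 < p then (1 - kap) * p else 1) (if p < 1 then (1 - kap) * (1 - p) else 1).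
have d20 : 0 < d2.
  rewrite /d2 lt_min; apply/andP; split; case: ifP => h //; rewrite mulr_gt0//.
  by rewrite subr_gt0.
rewrite /=; apply/nbhs_ballP; exists (Num.min d1 d2) => /=; first by rewrite lt_min d10 d20.
move=> q hq Aq.
have Aq' : q \in `[0, 1] by rewrite inE; exact: Aq.
have hq01 : 0 <= q <= 1 by move: Aq; rewrite in_itv.
move: hq; rewrite -ball_normE /= lt_min => /andP[hd1 hd2].
have hpq : `|q - p| < d1 by rewrite distrC.
have up := H1 q (g q) hq01 hpq (hg q Aq').
have hkp : kap * p <= q.
  move: hd2; rewrite /d2 lt_min => /andP[+ _]; case: ifP => h hh.
    move: hh; rewrite ltr_norml => /andP[_ hh]; move: hh.
    have : (1 - kap) * p = p - kap * p by ring.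
    lra.
  have -> : p = 0 by move: hp h; case/andP => h0 _ /negbT; rewrite -leNgt => h1; apply/eqP; rewrite eq_le h1 h0.
  by rewrite mulr0; case/andP: hq01.
have hkp' : kap * (1 - p) <= 1 - q.
  move: hd2; rewrite /d2 lt_min => /andP[_ +]; case: ifP => h hh.
    move: hh; rewrite ltr_norml => /andP[hh _]; move: hh.
    have : (1 - kap) * (1 - p) = (1 - p) - kap * (1 - p) by ring.
    lra.
  have -> : p = 1 by move: hp h; case/andP => _ h0 /negbT; rewrite -leNgt => h1; apply/eqP; rewrite eq_le h1 h0.
  by rewrite subrr mulr0 subr_ge0; case/andP: hq01.
have hk : forall x, kap * cp a b p x <= cp a b q x.
  move=> x; have := @a_ge0 _ a dF ga x; have := @b_ge0 _ b dF gb x => hb ha.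
  have : 0 <= (q - kap * p) * a x by rewrite mulr_ge0// subr_ge0.
  have : 0 <= ((1 - q) - kap * (1 - p)) * b x by rewrite mulr_ge0// subr_ge0.
  rewrite /cp; nra.
have lo := @lower _ a b dF r ga gb p (g p) t0 q (g q) kap hp hq01 u0 ht0 hG kk hk
  (hg q Aq').1 (@TP _ a b dF r ga gb q (g q) hq01 (hg q Aq')).
have h1 : (1 + e / (2 * g p)) * g p = g p + e / 2 by field; rewrite gt_eqF.
have h2 : g p - kap * g p < e.
  have -> : g p - kap * g p = g p * e / (2 * g p + e) by rewrite /kap; field; rewrite gt_eqF// addr_gt0// mulr_gt0.
  rewrite ltr_pdivrMr ?addr_gt0 ?mulr_gt0//.
  have := mulr_gt0 e0 e0; have := mulr_gt0 u0 e0; lra.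
change (`|g p - g q| < e); rewrite ltr_norml; apply/andP; split; lra.
Qed.
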